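(* For integers $d \ge 1$ and $n \ge 0$ define $$\widehat{\mathcal{I}}_{d,n} := n^d \int_{[0,1)^d} \Big[\prod_{j=1}^d (1-x_j)\Big]^{d-1} \exp\Big[-n \prod_{j=1}^d (1-x_j)\Big] \, dx_1\cdots dx_d.$$ Then for fixed $d$, as $n \to \infty$, $$\widehat{\mathcal{I}}_{d,n} = (\ln n)^{d-1} \sum_{j=0}^{d-1} \frac{(-1)^j \Gamma^{(j)}(d)}{j!\,(d-1-j)!} (\ln n)^{-j} + O\big((n \ln n)^{d-1} e^{-n}\big),$$ where $\Gamma^{(j)}$ denotes the $j$-th derivative of the Gamma function. *)

(* Defs.v *)
From Stdlib Require Import Arith Reals List.
Open Scope R_scope.

Definition improper_int_0_inf (f : R -> R) (v : R) : Prop :=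
  forall eps, 0 < eps ->
    exists a0 b0, 0 < a0 /\ a0 < b0 /\
      forall a b, 0 < a -> a <= a0 -> b0 <= b ->
        exists pr : Riemann_integrable f a b, Rabs (RiemannInt pr - v) < eps.

Fixpoint GammaDer (j : nat) (g : R -> R) : Prop :=
  match j with
  | O => forall s, 0 < s ->
           improper_int_0_inf (fun t => Rpower t (s - 1) * exp (- t)) (g s)
  | S j' => exists h, GammaDer j' h /\
              forall s, 0 < s -> derivable_pt_lim h s (g s)
  end.

(* iter_int d f v : v is the iterated Riemann integral over [0,1]^d of
   f, where f takes the list [x1; ...; xd] of coordinates. *)
Fixpoint iter_int (d : nat) (f : list R -> R) (v : R) : Prop :=
  match d with
  | O => v = f nil
  | S d' => exists g : R -> R,
      (forall x, 0 <= x <= 1 -> iter_int d' (fun xs => f (x :: xs)) (g x)) /\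
      exists pr : Riemann_integrable g 0 1, RiemannInt pr = v
  end.

Definition prod_one_minus (xs : list R) : R :=
  fold_right (fun x acc => (1 - x) * acc) 1 xs.

Definition Ihat_integrand (d n : nat) (xs : list R) : R :=
  INR n ^ d * (prod_one_minus xs) ^ (d - 1)
    * exp (- INR n * prod_one_minus xs).

(* Main.v *)
Require Import Defs.
From Stdlib Require Import Arith Reals List.
From Coquelicot Require Import Coquelicot.
From Stdlib Require Import Reals Lra Lia Psatz Arith List ZArith FunctionalExtensionality.
Open Scope R_scope.

Lemma exp_mult_INR : forall m x, exp (INR m * x) = exp x ^ m.
Proof.
  induction m; intros x.
  - simpl. rewrite Rmult_0_l, exp_0. reflexivity.
  - rewrite S_INR, Rmult_plus_distr_r, Rmult_1_l, exp_plus, IHm. simpl. ring.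
Qed.

Lemma exp_ge1 : forall y, 0 <= y -> 1 <= exp y.
Proof. intros y Hy. pose proof (exp_ineq1_le y). lra. Qed.

Lemma pow_exp_bound : forall m y, 0 <= y -> y ^ m <= INR m ^ m * exp y.
Proof.
  intros [|m] y Hy.
  - simpl. rewrite Rmult_1_l. now apply exp_ge1.
  - set (k := INR (S m)).
    assert (Hk : 0 < k) by (unfold k; apply lt_0_INR; lia).
    assert (H1 : 0 <= y / k <= exp (y / k)).
    { split. apply Rdiv_le_0_compat; lra.
      pose proof (exp_ineq1_le (y/k)). lra. }
    assert (H2 : (y / k) ^ S m <= exp (y / k) ^ S m) by (apply pow_incr; lra).
    rewrite <- exp_mult_INR in H2. fold k in H2.
    replace (k * (y / k)) with y in H2 by (field; lra).
    replace (y ^ S m) with (k ^ S m * (y / k) ^ S m).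
    2:{ rewrite <- Rpow_mult_distr. f_equal. field. lra. }
    apply Rmult_le_compat_l. apply pow_le; lra. exact H2.
Qed.

Lemma pow_exp_bound_a : forall m y a, 0 <= y -> 0 < a ->
  y ^ m <= (INR m / a) ^ m * exp (a * y).
Proof.
  intros m y a Hy Ha.
  pose proof (pow_exp_bound m (a * y) ltac:(nra)) as H.
  rewrite Rpow_mult_distr in H.
  assert (Hp : 0 < a ^ m) by (apply pow_lt; lra).
  replace ((INR m / a) ^ m) with (INR m ^ m / a ^ m).
  2:{ unfold Rdiv. rewrite Rpow_mult_distr. rewrite pow_inv. reflexivity. }
  apply (Rmult_le_reg_l (a ^ m)); auto.
  replace (a ^ m * (INR m ^ m / a ^ m * exp (a * y))) with (INR m ^ m * exp (a * y))
    by (field; lra).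
  exact H.
Qed.

Lemma exd_cont : forall (f : R -> R) x, ex_derive f x -> continuous f x.
Proof. intros f x H. apply (@ex_derive_continuous R_AbsRing R_NormedModule). exact H. Qed.

Definition Dom (f : R -> R) (g K1 K2 : R) : Prop :=
  0 < g /\ 0 <= K1 /\ 0 <= K2 /\ (forall x, continuous f x) /\
  (forall x, x <= 0 -> Rabs (f x) <= K1 * exp (g * x)) /\
  (forall x, 0 <= x -> Rabs (f x) <= K2 * exp (- (g * x))).

Lemma cont_exRInt : forall (f : R -> R) a b, (forall x, continuous f x) -> ex_RInt f a b.
Proof. intros. apply (@ex_RInt_continuous R_CompleteNormedModule). intros; auto. Qed.

Lemma RInt_exp_lin : forall K g a b, g <> 0 ->
  RInt (fun x => K * exp (g * x)) a b = K / g * (exp (g * b) - exp (g * a)).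
Proof.
  intros K g a b Hg.
  apply is_RInt_unique.
  assert (H := @is_RInt_derive R_CompleteNormedModule (fun x => K / g * exp (g * x)) (fun x => K * exp (g * x)) a b).
  replace (K / g * (exp (g * b) - exp (g * a))) with
     (minus (K / g * exp (g * b)) (K / g * exp (g * a))).
  2:{ unfold minus, plus, opp; simpl. ring. }
  apply H.
  - intros x _. auto_derive; auto. field. lra.
  - intros x _. apply exd_cont. auto_derive; auto.
Qed.

Lemma Rabs_le_b : forall x a, Rabs x <= a -> - a <= x <= a.
Proof. intros x a. unfold Rabs; destruct Rcase_abs; lra. Qed.

Lemma RInt_bound_abs : forall (f G : R -> R) a b, a <= b ->
  (forall x, continuous f x) -> (forall x, continuous G x) ->
  (forall x, a <= x <= b -> Rabs (f x) <= G x) ->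
  Rabs (RInt f a b) <= RInt G a b.
Proof.
  intros f G a b Hab Hf HG H.
  apply Rabs_le. split.
  - rewrite <- (RInt_opp G) by (apply cont_exRInt; auto).
    apply RInt_le; auto. apply cont_exRInt.
    intros x. apply (continuous_opp G). auto.
    apply cont_exRInt; auto.
    intros x Hx. specialize (H x ltac:(lra)). unfold opp; simpl.
    apply Rabs_le_b in H. lra.
  - apply RInt_le; auto. apply cont_exRInt; auto. apply cont_exRInt; auto.
    intros x Hx. specialize (H x ltac:(lra)). apply Rabs_le_b in H. lra.
Qed.


Lemma addsub_r : forall a b : R, a + b - b = a.
Proof. intros; ring. Qed.

Lemma Chasles3 : forall (f : R -> R) a b c, (forall x, continuous f x) ->
  RInt f a c = RInt f a b + RInt f b c.
Proof.
  intros f a b c Hf. symmetry.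
  apply (@RInt_Chasles R_CompleteNormedModule); apply cont_exRInt; auto.
Qed.

Lemma left_tail : forall f g K1 K2 a b, Dom f g K1 K2 -> a <= b -> b <= 0 ->
  Rabs (RInt f a b) <= K1 / g * exp (g * b).
Proof.
  intros f g K1 K2 a b [Hg [HK1 [HK2 [Hc [Hl Hr]]]]] Hab Hb.
  eapply Rle_trans.
  apply (RInt_bound_abs f (fun x => K1 * exp (g * x))); auto.
  intros x. apply exd_cont. auto_derive; auto.
  intros x Hx. apply Hl. lra.
  rewrite RInt_exp_lin by lra.
  assert (0 < exp (g * a)) by apply exp_pos.
  assert (0 <= K1 / g) by (apply Rdiv_le_0_compat; lra).
  nra.
Qed.

Lemma right_tail : forall f g K1 K2 a b, Dom f g K1 K2 -> 0 <= a -> a <= b ->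
  Rabs (RInt f a b) <= K2 / g * exp (- (g * a)).
Proof.
  intros f g K1 K2 a b [Hg [HK1 [HK2 [Hc [Hl Hr]]]]] Ha Hab.
  eapply Rle_trans.
  apply (RInt_bound_abs f (fun x => K2 * exp ((- g) * x))); auto.
  intros x. apply exd_cont. auto_derive; auto.
  intros x Hx. replace (- g * x) with (- (g * x)) by ring. apply Hr. lra.
  rewrite RInt_exp_lin by lra.
  assert (0 < exp (- g * b)) by apply exp_pos.
  assert (0 <= K2 / g) by (apply Rdiv_le_0_compat; lra).
  replace (- g * a) with (- (g * a)) by ring.
  replace (K2 / - g * (exp (- g * b) - exp (- (g * a)))) with
     (K2 / g * exp (- (g * a)) - K2 / g * exp (- g * b)) by (field; lra).
  nra.
Qed.

Lemma nest : forall f g K1 K2 a a' b' b, Dom f g K1 K2 ->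
  a <= a' -> a' <= 0 -> 0 <= b' -> b' <= b ->
  Rabs (RInt f a b - RInt f a' b') <= K1 / g * exp (g * a') + K2 / g * exp (- (g * b')).
Proof.
  intros f g K1 K2 a a' b' b HD H1 H2 H3 H4.
  assert (Hc : forall x, continuous f x) by apply HD.
  rewrite (Chasles3 f a a' b) by auto. rewrite (Chasles3 f a' b' b) by auto.
  replace (RInt f a a' + (RInt f a' b' + RInt f b' b) - RInt f a' b')
    with (RInt f a a' + RInt f b' b) by ring.
  eapply Rle_trans. apply Rabs_triang.
  apply Rplus_le_compat.
  eapply left_tail; eauto.
  eapply right_tail; eauto.
Qed.

Lemma nat_large : forall x, exists N : nat, x <= INR N.
Proof.
  intros x. destruct (archimed x) as [H1 H2].
  destruct (Z_le_gt_dec 0 (up x)) as [Hz|Hz].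
  - exists (Z.to_nat (up x)). rewrite INR_IZR_INZ, Z2Nat.id by auto. lra.
  - exists 0%nat. simpl. apply Z.gt_lt in Hz. apply IZR_lt in Hz. lra.
Qed.

Lemma exp_small : forall g K eps, 0 < g -> 0 <= K -> 0 < eps ->
  exists M, 0 < M /\ forall x, M <= x -> K * exp (- (g * x)) < eps.
Proof.
  intros g K eps Hg HK He.
  set (l := ln (eps / (K + 1))).
  exists ((Rabs l + 1) / g). split.
  { apply Rdiv_lt_0_compat; auto. pose proof (Rabs_pos l). lra. }
  intros x Hx.
  assert (Hgx : Rabs l + 1 <= g * x).
  { apply (Rmult_le_compat_l g) in Hx; [|lra].
    replace (g * ((Rabs l + 1) / g)) with (Rabs l + 1) in Hx by (field; lra). lra. }
  assert (Hlt : exp (- (g * x)) < eps / (K + 1)).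
  { replace (eps / (K+1)) with (exp l) by (unfold l; rewrite exp_ln; auto;
      apply Rdiv_lt_0_compat; lra).
    apply exp_increasing. pose proof (Rle_abs (- l)). rewrite Rabs_Ropp in H. lra. }
  assert (0 < exp (- (g * x))) by apply exp_pos.
  apply (Rmult_lt_compat_l (K+1)) in Hlt; [|lra].
  replace ((K + 1) * (eps / (K + 1))) with eps in Hlt by (field; lra).
  nra.
Qed.

Lemma seq_lim_bound : forall (u : nat -> R) r B, ex_finite_lim_seq u ->
  (exists N, forall m, (N <= m)%nat -> Rabs (u m - r) <= B) ->
  Rabs (real (Lim_seq u) - r) <= B.
Proof.
  intros u r B [l Hl] [N HN].
  rewrite (is_lim_seq_unique _ _ Hl). simpl.
  assert (H1 : Rbar_le (Lim_seq u) (Lim_seq (fun _ => r + B))).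
  { apply Lim_seq_le_loc. exists N. intros m Hm. specialize (HN m Hm).
    apply Rabs_le_b in HN. lra. }
  assert (H2 : Rbar_le (Lim_seq (fun _ => r - B)) (Lim_seq u)).
  { apply Lim_seq_le_loc. exists N. intros m Hm. specialize (HN m Hm).
    apply Rabs_le_b in HN. lra. }
  rewrite Lim_seq_const in H1, H2.
  rewrite (is_lim_seq_unique _ _ Hl) in H1, H2. simpl in H1, H2.
  apply Rabs_le. lra.
Qed.

Lemma cauchy_ex : forall (u : nat -> R) (e : nat -> R),
  (forall eps, 0 < eps -> exists N, e N < eps) ->
  (forall N n m, (N <= n)%nat -> (N <= m)%nat -> Rabs (u n - u m) <= e N) ->
  ex_finite_lim_seq u.
Proof.
  intros u e He Hu. apply ex_lim_seq_cauchy_corr.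
  intros eps. destruct (He eps (cond_pos eps)) as [N HN].
  exists N. intros n m Hn Hm. specialize (Hu N n m Hn Hm). lra.
Qed.

Definition Iinf (f : R -> R) : R := real (Lim_seq (fun m => RInt f (- INR m) (INR m))).
Definition Ileft (f : R -> R) (L : R) : R := real (Lim_seq (fun m => RInt f (- INR m) L)).

Lemma Iinf_ex : forall f g K1 K2, Dom f g K1 K2 ->
  ex_finite_lim_seq (fun m => RInt f (- INR m) (INR m)).
Proof.
  intros f g K1 K2 HD.
  assert (Hg : 0 < g) by apply HD.
  assert (HK : 0 <= K1 + K2) by (destruct HD as [_ [? [? _]]]; lra).
  apply (cauchy_ex _ (fun N => 2 * ((K1 + K2) / g * exp (- (g * INR N))))).
  - intros eps He.
    destruct (exp_small g (2 * ((K1 + K2) / g)) eps Hg) as [M [HM HMx]]; auto.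
    { apply Rmult_le_pos; [lra|]. apply Rdiv_le_0_compat; lra. }
    destruct (nat_large M) as [N HN]. exists N. specialize (HMx _ HN). lra.
  - intros N n m Hn Hm.
    assert (HnN : INR N <= INR n) by (apply le_INR; auto).
    assert (HmN : INR m <= INR m) by lra.
    assert (HmN' : INR N <= INR m) by (apply le_INR; auto).
    assert (H0 : 0 <= INR N) by apply pos_INR.
    pose proof (nest f g K1 K2 (- INR n) (- INR N) (INR N) (INR n) HD
      ltac:(lra) ltac:(lra) ltac:(lra) ltac:(lra)) as A1.
    pose proof (nest f g K1 K2 (- INR m) (- INR N) (INR N) (INR m) HD
      ltac:(lra) ltac:(lra) ltac:(lra) ltac:(lra)) as A2.
    replace (g * - INR N) with (- (g * INR N)) in A1, A2 by ring.
    replace (RInt f (- INR n) (INR n) - RInt f (- INR m) (INR m)) with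
      ((RInt f (- INR n) (INR n) - RInt f (- INR N) (INR N)) -
       (RInt f (- INR m) (INR m) - RInt f (- INR N) (INR N))) by ring.
    eapply Rle_trans. apply Rabs_triang. rewrite Rabs_Ropp.
    replace (2 * ((K1 + K2) / g * exp (- (g * INR N)))) with
     ((K1 / g * exp (- (g * INR N)) + K2 / g * exp (- (g * INR N))) +
      (K1 / g * exp (- (g * INR N)) + K2 / g * exp (- (g * INR N)))) by (field; lra).
    lra.
Qed.

Lemma Iinf_bound : forall f g K1 K2 a b, Dom f g K1 K2 -> a <= 0 -> 0 <= b ->
  Rabs (Iinf f - RInt f a b) <= K1 / g * exp (g * a) + K2 / g * exp (- (g * b)).
Proof.
  intros f g K1 K2 a b HD Ha Hb. unfold Iinf.
  apply seq_lim_bound. eapply Iinf_ex; eauto.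
  destruct (nat_large (Rmax (- a) b)) as [N HN].
  exists N. intros m Hm.
  assert (INR N <= INR m) by (apply le_INR; auto).
  pose proof (Rmax_l (- a) b). pose proof (Rmax_r (- a) b).
  apply nest; auto; lra.
Qed.

Lemma Ileft_ex : forall f g K1 K2 L, Dom f g K1 K2 ->
  ex_finite_lim_seq (fun m => RInt f (- INR m) L).
Proof.
  intros f g K1 K2 L HD.
  assert (Hg : 0 < g) by apply HD.
  assert (HK : 0 <= K1) by (destruct HD as [_ [? [? _]]]; lra).
  assert (Hc : forall x, continuous f x) by apply HD.
  apply ex_lim_seq_cauchy_corr. intros eps.
  destruct (exp_small g (2 * (K1 / g)) eps Hg) as [M [HM HMx]]; auto.
  { apply Rmult_le_pos; [lra|]. apply Rdiv_le_0_compat; lra. }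
  apply cond_pos.
  destruct (nat_large (Rmax M (Rabs L))) as [N HN].
  pose proof (Rmax_l M (Rabs L)). pose proof (Rmax_r M (Rabs L)).
  pose proof (Rle_abs L). pose proof (Rle_abs (- L)). rewrite Rabs_Ropp in H2.
  exists N.
  assert (Hk : forall k, (N <= k)%nat ->
      Rabs (RInt f (- INR k) L - RInt f (- INR N) L) <= K1 / g * exp (- (g * INR N))).
  { intros k Hk. assert (INR N <= INR k) by (apply le_INR; auto).
    rewrite (Chasles3 f (- INR k) (- INR N) L) by auto.
    rewrite addsub_r.
    replace (- (g * INR N)) with (g * - INR N) by ring.
    apply (left_tail f g K1 K2); auto; lra. }
  intros n m Hn Hm.
  specialize (HMx (INR N) ltac:(lra)).
  pose proof (Hk n Hn). pose proof (Hk m Hm).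
  replace (RInt f (- INR n) L - RInt f (- INR m) L) with
    ((RInt f (- INR n) L - RInt f (- INR N) L) - (RInt f (- INR m) L - RInt f (- INR N) L))
    by ring.
  eapply Rle_lt_trans. apply Rabs_triang. rewrite Rabs_Ropp. lra.
Qed.

Lemma Ileft_bound : forall f g K1 K2 a L, Dom f g K1 K2 -> a <= 0 -> a <= L ->
  Rabs (Ileft f L - RInt f a L) <= K1 / g * exp (g * a).
Proof.
  intros f g K1 K2 a L HD Ha HaL. unfold Ileft.
  assert (Hc : forall x, continuous f x) by apply HD.
  apply seq_lim_bound. eapply Ileft_ex; eauto.
  destruct (nat_large (- a)) as [N HN].
  exists N. intros m Hm.
  assert (INR N <= INR m) by (apply le_INR; auto).
  rewrite (Chasles3 f (- INR m) a L) by auto.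
  rewrite addsub_r.
  apply (left_tail f g K1 K2); auto; lra.
Qed.


Lemma tighten : forall g K y B x0, 0 < g -> 0 <= K ->
  (forall x, x0 <= x -> y <= B + K * exp (- (g * x))) -> y <= B.
Proof.
  intros g K y B x0 Hg HK H.
  destruct (Rle_or_lt y B) as [|Hlt]; auto.
  destruct (exp_small g K (y - B) Hg HK ltac:(lra)) as [M [HM HMx]].
  specialize (H (Rmax x0 M) (Rmax_l _ _)).
  specialize (HMx (Rmax x0 M) (Rmax_r _ _)). lra.
Qed.

Lemma tighten_l : forall g K y B a0, 0 < g -> 0 <= K ->
  (forall a, a <= a0 -> y <= B + K * exp (g * a)) -> y <= B.
Proof.
  intros g K y B a0 Hg HK H.
  apply (tighten g K y B (- a0)); auto.
  intros x Hx. replace (- (g * x)) with (g * (- x)) by ring. apply H. lra.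
Qed.

Lemma RInt_pt : forall (f : R -> R) a, RInt f a a = 0.
Proof. intros. rewrite RInt_point. reflexivity. Qed.

Lemma Ileft_small : forall f g K1 K2 L, Dom f g K1 K2 -> L <= 0 ->
  Rabs (Ileft f L) <= K1 / g * exp (g * L).
Proof.
  intros f g K1 K2 L HD HL.
  pose proof (Ileft_bound f g K1 K2 L L HD HL (Rle_refl _)) as H.
  rewrite RInt_pt, Rminus_0_r in H. exact H.
Qed.

Lemma Ileft_split : forall f g K1 K2 L, Dom f g K1 K2 ->
  Ileft f L = Ileft f 0 + RInt f 0 L.
Proof.
  intros f g K1 K2 L HD.
  assert (Hg : 0 < g) by apply HD.
  assert (HK : 0 <= K1) by (destruct HD as [_ [? [? _]]]; lra).
  assert (Hc : forall x, continuous f x) by apply HD.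
  assert (HK' : 0 <= 2 * (K1 / g)) by (apply Rmult_le_pos; [lra|]; apply Rdiv_le_0_compat; lra).
  assert (Hb : forall a, a <= Rmin 0 L ->
     Rabs (Ileft f L - (Ileft f 0 + RInt f 0 L)) <= 0 + 2 * (K1 / g) * exp (g * a)).
  { intros a Ha. pose proof (Rmin_l 0 L). pose proof (Rmin_r 0 L).
    pose proof (Ileft_bound f g K1 K2 a L HD ltac:(lra) ltac:(lra)) as H1.
    pose proof (Ileft_bound f g K1 K2 a 0 HD ltac:(lra) ltac:(lra)) as H2.
    rewrite (Chasles3 f a 0 L) in H1 by auto.
    replace (Ileft f L - (Ileft f 0 + RInt f 0 L)) with
      ((Ileft f L - (RInt f a 0 + RInt f 0 L)) - (Ileft f 0 - RInt f a 0)) by ring.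
    eapply Rle_trans. apply Rabs_triang. rewrite Rabs_Ropp. lra. }
  assert (H := tighten_l g _ _ 0 _ Hg HK' Hb).
  pose proof (Rabs_pos (Ileft f L - (Ileft f 0 + RInt f 0 L))).
  assert (Rabs (Ileft f L - (Ileft f 0 + RInt f 0 L)) = 0) by lra.
  apply Rabs_eq_0 in H1. lra.
Qed.

Lemma right_gap : forall f g K1 K2 L lo hi, Dom f g K1 K2 ->
  (forall b, Rmax 0 L <= b -> lo <= RInt f L b <= hi) ->
  lo <= Iinf f - Ileft f L <= hi.
Proof.
  intros f g K1 K2 L lo hi HD Hb.
  assert (Hg : 0 < g) by apply HD.
  assert (HK1 : 0 <= K1) by (destruct HD as [_ [? [? _]]]; lra).
  assert (HK2 : 0 <= K2) by (destruct HD as [_ [? [? _]]]; lra).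
  assert (Hc : forall x, continuous f x) by apply HD.
  assert (P1 : 0 <= 2 * (K1 / g)) by (apply Rmult_le_pos; [lra|]; apply Rdiv_le_0_compat; lra).
  assert (P2 : 0 <= K2 / g) by (apply Rdiv_le_0_compat; lra).
  assert (Key : forall a b, a <= Rmin 0 L -> Rmax 0 L <= b ->
     Rabs (Iinf f - Ileft f L - RInt f L b) <=
       2 * (K1 / g) * exp (g * a) + K2 / g * exp (- (g * b))).
  { intros a b Ha Hb'. pose proof (Rmin_l 0 L). pose proof (Rmin_r 0 L).
    pose proof (Rmax_l 0 L). pose proof (Rmax_r 0 L).
    pose proof (Iinf_bound f g K1 K2 a b HD ltac:(lra) ltac:(lra)) as Q1.
    pose proof (Ileft_bound f g K1 K2 a L HD ltac:(lra) ltac:(lra)) as Q2.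
    rewrite (Chasles3 f a L b) in Q1 by auto.
    replace (Iinf f - Ileft f L - RInt f L b) with
      ((Iinf f - (RInt f a L + RInt f L b)) - (Ileft f L - RInt f a L)) by ring.
    eapply Rle_trans. apply Rabs_triang. rewrite Rabs_Ropp. lra. }
  split.
  - cut (- (Iinf f - Ileft f L) <= - lo). lra.
    apply (tighten g (K2 / g) _ _ (Rmax 0 L)); auto. intros b Hb'.
    specialize (Hb b Hb').
    cut (- (Iinf f - Ileft f L) <= - lo + K2 / g * exp (- (g * b)) + 0). lra.
    apply (tighten_l g (2 * (K1/g)) _ _ (Rmin 0 L)); auto. intros a Ha.
    specialize (Key a b Ha Hb'). apply Rabs_le_b in Key. lra.
  - apply (tighten g (K2 / g) _ _ (Rmax 0 L)); auto. intros b Hb'.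
    specialize (Hb b Hb').
    cut (Iinf f - Ileft f L <= hi + K2 / g * exp (- (g * b)) + 0). lra.
    apply (tighten_l g (2 * (K1/g)) _ _ (Rmin 0 L)); auto. intros a Ha.
    specialize (Key a b Ha Hb'). apply Rabs_le_b in Key. lra.
Qed.

Lemma Iinf_approx : forall f g K1 K2, Dom f g K1 K2 -> forall eps, 0 < eps ->
  exists M, 0 < M /\ forall a b, a <= - M -> M <= b -> Rabs (Iinf f - RInt f a b) < eps.
Proof.
  intros f g K1 K2 HD eps He.
  assert (Hg : 0 < g) by apply HD.
  assert (HK1 : 0 <= K1) by (destruct HD as [_ [? [? _]]]; lra).
  assert (HK2 : 0 <= K2) by (destruct HD as [_ [? [? _]]]; lra).
  assert (P : 0 <= (K1 + K2) / g) by (apply Rdiv_le_0_compat; lra).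
  destruct (exp_small g ((K1 + K2) / g) eps Hg P He) as [M [HM HMx]].
  exists M. split; auto. intros a b Ha Hb.
  eapply Rle_lt_trans. apply (Iinf_bound f g K1 K2 a b HD); lra.
  assert (exp (g * a) <= exp (- (g * M))).
  { destruct (Req_dec (g*a) (-(g*M))) as [E|E]. rewrite E; lra.
    left. apply exp_increasing. nra. }
  assert (exp (- (g * b)) <= exp (- (g * M))).
  { destruct (Req_dec (-(g*b)) (-(g*M))) as [E|E]. rewrite E; lra.
    left. apply exp_increasing. nra. }
  specialize (HMx M (Rle_refl _)).
  assert (0 <= K1 / g) by (apply Rdiv_le_0_compat; lra).
  assert (0 <= K2 / g) by (apply Rdiv_le_0_compat; lra).
  replace ((K1 + K2) / g * exp (- (g * M))) with
    (K1 / g * exp (- (g * M)) + K2 / g * exp (- (g * M))) in HMx by (field; lra).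
  nra.
Qed.


Lemma exp_mono : forall x y, x <= y -> exp x <= exp y.
Proof.
  intros x y H. destruct (Req_dec x y) as [E|E]. subst; lra.
  left. apply exp_increasing. lra.
Qed.

Lemma Dom_gen : forall j s1 s2, 0 < s1 ->
  exists g K1 K2, 0 < g /\ 0 <= K1 /\ 0 <= K2 /\
   forall C (f : R -> R), 0 <= C -> (forall x, continuous f x) ->
   (forall x, x <= 0 -> Rabs (f x) <= C * (Rabs x) ^ j * exp (s1 * x)) ->
   (forall x, 0 <= x -> Rabs (f x) <= C * x ^ j * exp (s2 * x - exp x)) ->
   Dom f g (C * K1) (C * K2).
Proof.
  intros j s1 s2 Hs1.
  destruct (nat_large (s2 + 2)) as [M HM].
  set (g := Rmin (s1 / 2) 1).
  assert (Hg : 0 < g) by (unfold g; apply Rmin_pos; lra).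
  assert (Hg1 : g <= s1 / 2) by apply Rmin_l.
  assert (Hg2 : g <= 1) by apply Rmin_r.
  exists g, ((INR j / (s1 / 2)) ^ j), (INR j ^ j * INR M ^ M).
  assert (P1 : 0 <= (INR j / (s1 / 2)) ^ j).
  { apply pow_le. apply Rdiv_le_0_compat. apply pos_INR. lra. }
  assert (P2 : 0 <= INR j ^ j * INR M ^ M).
  { apply Rmult_le_pos; apply pow_le; apply pos_INR. }
  split; [auto|split; [auto|split; [auto|]]].
  intros C f HC Hc Hl Hr.
  split; [auto|split; [nra|split; [nra|split; [auto|split]]]].
  - intros x Hx. eapply Rle_trans. apply Hl; auto.
    assert (Hxa : Rabs x = - x) by (apply Rabs_left1; auto).
    pose proof (pow_exp_bound_a j (Rabs x) (s1 / 2) (Rabs_pos x) ltac:(lra)) as Hp.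
    rewrite Hxa in Hp |- *.
    assert (E : exp (s1 / 2 * - x) * exp (s1 * x) = exp (s1 / 2 * x)).
    { rewrite <- exp_plus. apply f_equal. field. }
    assert (E2 : exp (s1 / 2 * x) <= exp (g * x)) by (apply exp_mono; nra).
    pose proof (exp_pos (s1 * x)).
    assert ((- x) ^ j * exp (s1 * x) <= (INR j / (s1 / 2)) ^ j * exp (g * x)).
    { eapply Rle_trans. apply Rmult_le_compat_r. lra. exact Hp.
      rewrite Rmult_assoc, E. apply Rmult_le_compat_l; auto. }
    rewrite Rmult_assoc. rewrite (Rmult_assoc C). apply Rmult_le_compat_l; auto.
  - intros x Hx. eapply Rle_trans. apply Hr; auto.
    pose proof (pow_exp_bound j x Hx) as Hp.
    pose proof (pow_exp_bound M (exp x) (Rlt_le _ _ (exp_pos x))) as Hq.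
    rewrite <- exp_mult_INR in Hq.
    assert (E : exp (s2 * x - exp x) <= INR M ^ M * exp (s2 * x - INR M * x)).
    { unfold Rminus. rewrite !exp_plus, !exp_Ropp.
      pose proof (exp_pos (INR M * x)). pose proof (exp_pos (exp x)).
      pose proof (exp_pos (s2 * x)).
      apply (Rmult_le_reg_r (exp (exp x) * exp (INR M * x))). nra.
      replace (exp (s2 * x) * / exp (exp x) * (exp (exp x) * exp (INR M * x)))
        with (exp (s2 * x) * exp (INR M * x)) by (field; lra).
      replace (INR M ^ M * (exp (s2 * x) * / exp (INR M * x)) * (exp (exp x) * exp (INR M * x)))
        with (exp (s2 * x) * (INR M ^ M * exp (exp x))) by (field; lra).
      apply Rmult_le_compat_l; lra. }
    assert (E2 : exp x * exp (s2 * x - INR M * x) <= exp (- (g * x))).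
    { rewrite <- exp_plus. apply exp_mono. nra. }
    assert (0 <= x ^ j) by (apply pow_le; auto).
    assert (x ^ j * exp (s2 * x - exp x) <= INR j ^ j * INR M ^ M * exp (- (g * x))).
    { eapply Rle_trans. apply Rmult_le_compat_l. auto. exact E.
      eapply Rle_trans. apply Rmult_le_compat_r.
      apply Rmult_le_pos. apply pow_le, pos_INR. left; apply exp_pos. exact Hp.
      pose proof (pow_le (INR M) M (pos_INR M)).
      pose proof (pow_le (INR j) j (pos_INR j)).
      replace (INR j ^ j * exp x * (INR M ^ M * exp (s2 * x - INR M * x))) with
        (INR j ^ j * INR M ^ M * (exp x * exp (s2 * x - INR M * x))) by ring.
      apply Rmult_le_compat_l. nra. exact E2. }
    rewrite Rmult_assoc. rewrite (Rmult_assoc C). apply Rmult_le_compat_l; auto.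
Qed.


Definition fj (j : nat) (s : R) : R -> R := fun x => x ^ j * exp (s * x - exp x).

Lemma fj_cont : forall j s x, continuous (fj j s) x.
Proof. intros. apply exd_cont. unfold fj. auto_derive; auto. Qed.

Lemma Dom_fj : forall j s, 0 < s -> exists g K1 K2, Dom (fj j s) g K1 K2.
Proof.
  intros j s Hs.
  destruct (Dom_gen j s s Hs) as [g [K1 [K2 [Hg [HK1 [HK2 H]]]]]].
  exists g, (1 * K1), (1 * K2). apply H; [lra| apply fj_cont | |].
  - intros x Hx. unfold fj. rewrite Rabs_mult, RPow_abs.
    rewrite (Rabs_right (exp _)) by (left; apply exp_pos).
    rewrite Rmult_1_l. apply Rmult_le_compat_l. apply Rabs_pos.
    apply exp_mono. pose proof (exp_pos x). lra.
  - intros x Hx. unfold fj. rewrite Rabs_mult.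
    rewrite (Rabs_right (exp _)) by (left; apply exp_pos).
    rewrite Rabs_right by (apply Rle_ge, pow_le; auto). lra.
Qed.

Lemma exp_rem : forall y, Rabs (exp y - 1 - y) <= y ^ 2 * exp (Rabs y).
Proof.
  intros y.
  pose proof (exp_ineq1_le y) as H1.
  pose proof (exp_ineq1_le (- y)) as H2.
  pose proof (exp_pos y) as H3.
  assert (H4 : (1 - y) * exp y <= 1).
  { rewrite exp_Ropp in H2. apply (Rmult_le_compat_r (exp y)) in H2; [|lra].
    rewrite Rinv_l in H2 by lra. lra. }
  rewrite Rabs_right by lra.
  destruct (Rle_or_lt 0 y) as [Hy|Hy].
  - rewrite Rabs_right by lra. nra.
  - rewrite Rabs_left by lra.
    pose proof (exp_ge1 (- y) ltac:(lra)). nra.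
Qed.

Definition G (j : nat) (s : R) : R := Iinf (fj j s).

Lemma le_eps : forall x y, (forall d, 0 < d -> x <= y + d) -> x <= y.
Proof.
  intros x y H. destruct (Rle_or_lt x y) as [|Hlt]; auto.
  specialize (H ((x - y) / 2) ltac:(lra)). lra.
Qed.

Lemma RInt_lin3 : forall (f1 f2 f3 : R -> R) a b h,
  (forall x, continuous f1 x) -> (forall x, continuous f2 x) -> (forall x, continuous f3 x) ->
  RInt (fun x => f1 x - f2 x - h * f3 x) a b = RInt f1 a b - RInt f2 a b - h * RInt f3 a b.
Proof.
  intros f1 f2 f3 a b h H1 H2 H3.
  change (RInt (fun x => minus (minus (f1 x) (f2 x)) (scal h (f3 x))) a b =
    minus (minus (RInt f1 a b) (RInt f2 a b)) (scal h (RInt f3 a b))).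
  assert (E1 : ex_RInt f1 a b) by (apply cont_exRInt; auto).
  assert (E2 : ex_RInt f2 a b) by (apply cont_exRInt; auto).
  assert (E3 : ex_RInt f3 a b) by (apply cont_exRInt; auto).
  rewrite (@RInt_minus R_CompleteNormedModule).
  rewrite (@RInt_minus R_CompleteNormedModule) by auto.
  rewrite (@RInt_scal R_CompleteNormedModule) by auto. reflexivity.
  apply (@ex_RInt_minus R_CompleteNormedModule); auto.
  apply (@ex_RInt_scal R_CompleteNormedModule); auto.
Qed.

Lemma fj_bound_neg : forall j s x, x <= 0 -> Rabs (fj j s x) <= Rabs x ^ j * exp (s * x).
Proof.
  intros j s x Hx. unfold fj. rewrite Rabs_mult, RPow_abs.
  rewrite (Rabs_right (exp _)) by (left; apply exp_pos).
  apply Rmult_le_compat_l. apply Rabs_pos.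
  apply exp_mono. pose proof (exp_pos x). lra.
Qed.

Lemma fj_bound_pos : forall j s x, 0 <= x -> Rabs (fj j s x) = x ^ j * exp (s * x - exp x).
Proof.
  intros j s x Hx. unfold fj. rewrite Rabs_mult.
  rewrite (Rabs_right (exp _)) by (left; apply exp_pos).
  rewrite Rabs_right by (apply Rle_ge, pow_le; auto). reflexivity.
Qed.

Lemma G_key : forall j s, 0 < s -> exists B, 0 <= B /\ forall h, Rabs h <= s / 4 ->
  Rabs (G j (s + h) - G j s - h * G (S j) s) <= h ^ 2 * B.
Proof.
  intros j s Hs.
  destruct (Dom_gen (j + 2) (3 * s / 4) (5 * s / 4) ltac:(lra))
    as [g0 [K1 [K2 [Hg0 [HK1 [HK2 HD]]]]]].
  exists ((K1 + K2) / g0). split. apply Rdiv_le_0_compat; lra.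
  intros h Hh.
  pose proof (Rabs_pos h) as Hh0.
  set (rem := fun x => fj j (s + h) x - fj j s x - h * fj (S j) s x).
  assert (Hrem : forall x, rem x = fj j s x * (exp (h * x) - 1 - h * x)).
  { intros x. unfold rem, fj. simpl pow.
    replace ((s + h) * x - exp x) with ((s * x - exp x) + h * x) by ring.
    rewrite exp_plus. ring. }
  assert (Drem : Dom rem g0 (h ^ 2 * K1) (h ^ 2 * K2)).
  { apply HD.
    - apply pow2_ge_0.
    - intros x. apply exd_cont. unfold rem, fj. auto_derive; auto.
    - intros x Hx. rewrite Hrem, Rabs_mult.
      pose proof (fj_bound_neg j s x Hx) as Q1.
      pose proof (exp_rem (h * x)) as Q2.
      assert (Q3 : exp (Rabs (h * x)) <= exp (- (s / 4) * x)).
      { apply exp_mono. rewrite Rabs_mult, (Rabs_left1 x) by auto. nra. }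
      assert (Q4 : exp (s * x) * exp (- (s / 4) * x) = exp (3 * s / 4 * x)).
      { rewrite <- exp_plus. apply f_equal. field. }
      rewrite (Rabs_left1 x) by auto. rewrite (Rabs_left1 x) in Q1 by auto.
      replace ((h * x) ^ 2) with (h ^ 2 * (- x) ^ 2) in Q2 by ring.
      assert (0 <= (- x) ^ j) by (apply pow_le; lra).
      assert (0 <= h ^ 2 * (- x) ^ 2) by (apply Rmult_le_pos; apply pow2_ge_0).
      pose proof (exp_pos (Rabs (h * x))). pose proof (exp_pos (s * x)).
      eapply Rle_trans. apply Rmult_le_compat; try apply Rabs_pos. exact Q1. exact Q2.
      replace (h ^ 2 * (- x) ^ (j + 2) * exp (3 * s / 4 * x)) with
        ((- x) ^ j * (h ^ 2 * (- x) ^ 2) * (exp (s * x) * exp (- (s / 4) * x))).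
      2:{ rewrite Q4, pow_add. ring. }
      replace ((- x) ^ j * exp (s * x) * (h ^ 2 * (- x) ^ 2 * exp (Rabs (h * x)))) with
        ((- x) ^ j * (h ^ 2 * (- x) ^ 2) * (exp (s * x) * exp (Rabs (h * x)))) by ring.
      apply Rmult_le_compat_l. nra. apply Rmult_le_compat_l; lra.
    - intros x Hx. rewrite Hrem, Rabs_mult, fj_bound_pos by auto.
      pose proof (exp_rem (h * x)) as Q2.
      assert (Q3 : exp (Rabs (h * x)) <= exp ((s / 4) * x)).
      { apply exp_mono. rewrite Rabs_mult, (Rabs_right x) by lra. nra. }
      assert (Q4 : exp (s * x - exp x) * exp ((s / 4) * x) = exp (5 * s / 4 * x - exp x)).
      { rewrite <- exp_plus. apply f_equal. field. }
      replace ((h * x) ^ 2) with (h ^ 2 * x ^ 2) in Q2 by ring.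
      assert (0 <= x ^ j) by (apply pow_le; lra).
      assert (0 <= h ^ 2 * x ^ 2) by (apply Rmult_le_pos; apply pow2_ge_0).
      pose proof (exp_pos (Rabs (h * x))). pose proof (exp_pos (s * x - exp x)).
      eapply Rle_trans. apply Rmult_le_compat_l. apply Rmult_le_pos; lra. exact Q2.
      replace (h ^ 2 * x ^ (j + 2) * exp (5 * s / 4 * x - exp x)) with
        (x ^ j * (h ^ 2 * x ^ 2) * (exp (s * x - exp x) * exp ((s / 4) * x))).
      2:{ rewrite Q4, pow_add. ring. }
      replace (x ^ j * exp (s * x - exp x) * (h ^ 2 * x ^ 2 * exp (Rabs (h * x)))) with
        (x ^ j * (h ^ 2 * x ^ 2) * (exp (s * x - exp x) * exp (Rabs (h * x)))) by ring.
      apply Rmult_le_compat_l. nra. apply Rmult_le_compat_l; lra. }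
  assert (HsH : 0 < s + h) by (apply Rabs_le_b in Hh; lra).
  destruct (Dom_fj j (s + h) HsH) as [ga [Ka1 [Ka2 Da]]].
  destruct (Dom_fj j s Hs) as [gb [Kb1 [Kb2 Db]]].
  destruct (Dom_fj (S j) s Hs) as [gc [Kc1 [Kc2 Dc]]].
  apply le_eps. intros d Hd.
  set (e := d / (3 + s)).
  assert (He : 0 < e) by (unfold e; apply Rdiv_lt_0_compat; lra).
  destruct (Iinf_approx _ _ _ _ Da e He) as [M1 [HM1 A1]].
  destruct (Iinf_approx _ _ _ _ Db e He) as [M2 [HM2 A2]].
  destruct (Iinf_approx _ _ _ _ Dc e He) as [M3 [HM3 A3]].
  set (M := Rmax M1 (Rmax M2 M3)).
  assert (M1 <= M) by apply Rmax_l.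
  assert (M2 <= M) by (eapply Rle_trans; [apply Rmax_l|apply Rmax_r]).
  assert (M3 <= M) by (eapply Rle_trans; [apply Rmax_r|apply Rmax_r]).
  specialize (A1 (- M) M ltac:(lra) ltac:(lra)).
  specialize (A2 (- M) M ltac:(lra) ltac:(lra)).
  specialize (A3 (- M) M ltac:(lra) ltac:(lra)).
  assert (HR : Rabs (RInt rem (- M) M) <= h ^ 2 * ((K1 + K2) / g0)).
  { assert (Hc : forall x, continuous rem x) by apply Drem.
    rewrite (Chasles3 rem (- M) 0 M) by auto.
    eapply Rle_trans. apply Rabs_triang.
    pose proof (left_tail rem g0 _ _ (- M) 0 Drem ltac:(lra) ltac:(lra)).
    pose proof (right_tail rem g0 _ _ 0 M Drem ltac:(lra) ltac:(lra)).
    rewrite Rmult_0_r, exp_0 in H2. rewrite Rmult_0_r, Ropp_0, exp_0 in H3.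
    replace (h ^ 2 * ((K1 + K2) / g0)) with (h ^ 2 * K1 / g0 * 1 + h ^ 2 * K2 / g0 * 1)
      by (field; lra).
    lra. }
  unfold rem in HR. rewrite RInt_lin3 in HR by apply fj_cont.
  unfold G.
  set (I1 := Iinf (fj j (s + h))) in *. set (I2 := Iinf (fj j s)) in *.
  set (I3 := Iinf (fj (S j) s)) in *.
  set (R1 := RInt (fj j (s + h)) (- M) M) in *.
  set (R2 := RInt (fj j s) (- M) M) in *.
  set (R3 := RInt (fj (S j) s) (- M) M) in *.
  replace (I1 - I2 - h * I3) with ((I1 - R1) - (I2 - R2) - h * (I3 - R3) + (R1 - R2 - h * R3))
    by ring.
  assert (Rabs (h * (I3 - R3)) <= s / 4 * e).
  { rewrite Rabs_mult. apply Rmult_le_compat; try apply Rabs_pos; lra. }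
  assert (e * (2 + s / 4) <= d).
  { unfold e. apply (Rmult_le_reg_r (3 + s)). lra.
    replace (d / (3 + s) * (2 + s / 4) * (3 + s)) with (d * (2 + s / 4)) by (field; lra).
    nra. }
  assert (T1 := Rabs_triang ((I1 - R1) - (I2 - R2) - h * (I3 - R3)) (R1 - R2 - h * R3)).
  assert (T2 := Rabs_triang ((I1 - R1) - (I2 - R2)) (- (h * (I3 - R3)))).
  assert (T3 := Rabs_triang (I1 - R1) (- (I2 - R2))).
  rewrite Rabs_Ropp in T2, T3.
  replace (I1 - R1 - (I2 - R2) - h * (I3 - R3) + (R1 - R2 - h * R3)) with
    (I1 - R1 + - (I2 - R2) + - (h * (I3 - R3)) + (R1 - R2 - h * R3)) by ring.
  replace ((I1 - R1) - (I2 - R2) - h * (I3 - R3)) with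
    ((I1 - R1) - (I2 - R2) + - (h * (I3 - R3))) in T1 by ring.
  replace ((I1 - R1) - (I2 - R2)) with ((I1 - R1) + - (I2 - R2)) in T1, T2 by ring.
  lra.
Qed.


Lemma G_deriv : forall j s, 0 < s -> derivable_pt_lim (G j) s (G (S j) s).
Proof.
  intros j s Hs. destruct (G_key j s Hs) as [B [HB Hk]].
  intros eps Heps.
  assert (Hd : 0 < Rmin (s / 4) (eps / (B + 1))).
  { apply Rmin_pos. lra. apply Rdiv_lt_0_compat; lra. }
  exists (mkposreal _ Hd). intros h Hh0 Hh. simpl in Hh.
  pose proof (Rmin_l (s / 4) (eps / (B + 1))).
  pose proof (Rmin_r (s / 4) (eps / (B + 1))).
  specialize (Hk h ltac:(lra)).
  assert (Hpos : 0 < Rabs h) by (apply Rabs_pos_lt; auto).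
  replace ((G j (s + h) - G j s) / h - G (S j) s) with
    ((G j (s + h) - G j s - h * G (S j) s) / h) by (field; auto).
  rewrite Rabs_div by auto.
  apply (Rmult_lt_reg_r (Rabs h)); auto.
  replace (Rabs (G j (s + h) - G j s - h * G (S j) s) / Rabs h * Rabs h) with
    (Rabs (G j (s + h) - G j s - h * G (S j) s)) by (field; lra).
  replace (h ^ 2) with (Rabs h * Rabs h) in Hk.
  2:{ rewrite <- Rabs_mult. simpl. rewrite Rmult_1_r. apply Rabs_right.
      apply Rle_ge. nra. }
  assert (Rabs h * B < eps).
  { apply (Rle_lt_trans _ (eps / (B + 1) * B)). apply Rmult_le_compat_r; lra.
    apply (Rmult_lt_reg_r (B + 1)). lra.
    replace (eps / (B + 1) * B * (B + 1)) with (eps * B) by (field; lra). nra. }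
  nra.
Qed.

Lemma Gamma_base : forall s, 0 < s ->
  improper_int_0_inf (fun t => Rpower t (s - 1) * exp (- t)) (G 0 s).
Proof.
  intros s Hs eps Heps.
  destruct (Dom_fj 0 s Hs) as [g [K1 [K2 HD]]].
  destruct (Iinf_approx _ _ _ _ HD eps Heps) as [M [HM HA]].
  exists (exp (- M)), (exp M). split. apply exp_pos. split. apply exp_increasing; lra.
  intros a b Ha Ha0 Hb.
  assert (Hab : a <= b).
  { assert (exp (- M) < exp M) by (apply exp_increasing; lra). lra. }
  set (F := fun t => Rpower t (s - 1) * exp (- t)).
  assert (HF : forall z, 0 < z -> continuous F z).
  { intros z Hz. apply exd_cont. unfold F, Rpower. auto_derive. auto. }
  assert (Hex : ex_RInt F a b).
  { apply (@ex_RInt_continuous R_CompleteNormedModule). intros z Hz.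
    apply HF. rewrite Rmin_left in Hz by auto. lra. }
  exists (ex_RInt_Reals_0 _ _ _ Hex).
  rewrite <- RInt_Reals.
  assert (HC : RInt F a b = RInt (fj 0 s) (ln a) (ln b)).
  { assert (H := @is_RInt_comp R_CompleteNormedModule F exp exp (ln a) (ln b)).
    rewrite !exp_ln in H by lra.
    symmetry. apply is_RInt_unique.
    eapply is_RInt_ext; [|apply H].
    - intros x _. unfold fj, F, Rpower. rewrite ln_exp. simpl pow.
      change (scal (exp x) (exp ((s - 1) * x) * exp (- exp x))) with
        (exp x * (exp ((s - 1) * x) * exp (- exp x))).
      rewrite <- !exp_plus. rewrite Rmult_1_l. apply f_equal. ring.
    - intros x _. apply HF. apply exp_pos.
    - intros x _. split. apply is_derive_exp. apply exd_cont. auto_derive; auto. }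
  rewrite HC.
  assert (ln a <= - M).
  { rewrite <- (ln_exp (- M)). destruct (Req_dec a (exp (- M))) as [E|E].
    rewrite E; lra. left. apply ln_increasing; lra. }
  assert (M <= ln b).
  { rewrite <- (ln_exp M). destruct (Req_dec b (exp M)) as [E|E].
    rewrite E; lra. left. apply ln_increasing. apply exp_pos. lra. }
  specialize (HA (ln a) (ln b) ltac:(lra) ltac:(lra)).
  rewrite Rabs_minus_sym. exact HA.
Qed.

Lemma GammaDer_G : forall j, GammaDer j (G j).
Proof.
  induction j.
  - simpl. apply Gamma_base.
  - simpl. exists (G j). split; auto. apply G_deriv.
Qed.


Lemma ballR : forall x e y : R, ball x e y <-> Rabs (y - x) < e.
Proof. intros. split; intro H; exact H. Qed.

Definition T (phi : R -> R) (c : R) : R := RInt (fun x => phi (c * (1 - x))) 0 1.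
Fixpoint Tk (k : nat) (phi : R -> R) : R -> R :=
  match k with O => phi | S k' => T (Tk k' phi) end.

Lemma solve_c : forall A B c : R, c <> 0 -> - c * A = - B -> A = B / c.
Proof. intros A B c H E. field_simplify_eq; auto. lra. Qed.

Lemma T_subst : forall phi c, (forall x, continuous phi x) -> c <> 0 ->
  T phi c = RInt phi 0 c / c.
Proof.
  intros phi c Hc Hne.
  assert (H := @is_RInt_comp_lin R_CompleteNormedModule phi (- c) c 0 1 (RInt phi c 0)).
  replace (- c * 0 + c) with c in H by ring.
  replace (- c * 1 + c) with 0 in H by ring.
  assert (H' : is_RInt (fun y => scal (- c) (phi (- c * y + c))) 0 1 (RInt phi c 0)).
  { apply H. apply (@RInt_correct R_CompleteNormedModule). apply cont_exRInt; auto. }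
  assert (E : RInt (fun y => scal (- c) (phi (- c * y + c))) 0 1 = RInt phi c 0)
    by (apply is_RInt_unique; auto).
  assert (Hex : ex_RInt (fun x => phi (c * (1 - x))) 0 1).
  { apply cont_exRInt. intros x. apply (continuous_comp (fun x => c * (1 - x)) phi).
    apply exd_cont. auto_derive; auto. auto. }
  rewrite (RInt_ext (fun y => scal (- c) (phi (- c * y + c))) (fun y => scal (- c) (phi (c * (1 - y)))))
    in E.
  2:{ intros x _. do 2 f_equal. ring. }
  rewrite (@RInt_scal R_CompleteNormedModule) in E by auto.
  rewrite <- (@opp_RInt_swap R_CompleteNormedModule phi 0 c) in E by (apply cont_exRInt; auto).
  unfold T. change (scal (- c) (RInt (fun x => phi (c * (1 - x))) 0 1)) with
    (- c * RInt (fun x => phi (c * (1 - x))) 0 1) in E.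
  change (opp (RInt phi 0 c)) with (- RInt phi 0 c) in E.
  apply solve_c; auto.
Qed.

Lemma RInt_cont_fun : forall phi : R -> R, (forall x, continuous phi x) ->
  forall c, continuous (fun y => RInt phi 0 y) c.
Proof.
  intros phi Hc c. apply (continuous_RInt_1 phi 0 c (fun y => RInt phi 0 y)).
  apply filter_forall. intros z. apply (@RInt_correct R_CompleteNormedModule).
  apply cont_exRInt; auto.
Qed.

Lemma T_cont : forall phi : R -> R, (forall x, continuous phi x) -> forall c, continuous (T phi) c.
Proof.
  intros phi Hc c.
  destruct (Req_dec c 0) as [E|E].
  - subst c. apply filterlim_locally. intros eps.
    assert (He2 : 0 < eps / 2) by (pose proof (cond_pos eps); lra).
    pose proof (proj1 (filterlim_locally (F := locally 0) phi (phi 0)) (Hc 0)) as H0.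
    destruct (H0 (mkposreal _ He2)) as [del Hdel].
    exists del. intros y Hy. apply ballR. apply ballR in Hy.
    assert (E0 : T phi 0 = phi 0).
    { unfold T. rewrite (RInt_ext _ (fun _ => phi 0)).
      rewrite RInt_const. change (scal (1 - 0) (phi 0)) with ((1 - 0) * phi 0). ring.
      intros x _. f_equal. ring. }
    rewrite E0. unfold T.
    assert (Hex : ex_RInt (fun x => phi (y * (1 - x))) 0 1).
    { apply cont_exRInt. intros x. apply (continuous_comp (fun x => y * (1 - x)) phi).
      apply exd_cont. auto_derive; auto. auto. }
    replace (RInt (fun x => phi (y * (1 - x))) 0 1 - phi 0) with
      (RInt (fun x => phi (y * (1 - x)) - phi 0) 0 1).
    2:{ rewrite (RInt_ext _ (fun x => minus (phi (y * (1 - x))) (phi 0))) by (intros; reflexivity).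
        rewrite (@RInt_minus R_CompleteNormedModule); auto.
        rewrite RInt_const. change (minus (RInt (fun x => phi (y * (1 - x))) 0 1) (scal (1 - 0) (phi 0)))
          with (RInt (fun x => phi (y * (1 - x))) 0 1 - (1 - 0) * phi 0). rewrite Rminus_0_r, Rmult_1_l. reflexivity.
        apply (@ex_RInt_const R_CompleteNormedModule). }
    apply (Rle_lt_trans _ ((1 - 0) * (eps / 2))).
    2:{ pose proof (cond_pos eps). lra. }
    apply (@norm_RInt_le_const R_NormedModule (fun x => phi (y * (1 - x)) - phi 0) 0 1).
    lra.
    + intros x Hx. change (norm (phi (y * (1 - x)) - phi 0)) with (Rabs (phi (y * (1 - x)) - phi 0)).
      assert (B : ball 0 del (y * (1 - x))).
      { apply ballR. rewrite Rminus_0_r. rewrite Rabs_mult.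
        rewrite (Rabs_right (1 - x)) by lra. try rewrite Rminus_0_r in Hy.
        change (Rabs (y - 0) < del) in Hy. rewrite Rminus_0_r in Hy. pose proof (Rabs_pos y). nra. }
      specialize (Hdel _ B). change (Rabs (phi (y * (1 - x)) - phi 0) < eps / 2) in Hdel. lra.
    + apply (@RInt_correct R_CompleteNormedModule).
      apply (@ex_RInt_minus R_CompleteNormedModule); auto.
      apply (@ex_RInt_const R_CompleteNormedModule).
  - apply (continuous_ext_loc (T phi) (fun y => RInt phi 0 y / y) c).
    + assert (Hp : 0 < Rabs c / 2) by (pose proof (Rabs_pos_lt c E); lra).
      exists (mkposreal _ Hp). intros y Hy. change (Rabs (y - c) < Rabs c / 2) in Hy.
      rewrite T_subst; auto. intros Hy0. subst y.
      rewrite Rminus_0_l, Rabs_Ropp in Hy. lra.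
    + apply (continuous_mult (fun y => RInt phi 0 y) (fun y => / y)).
      apply RInt_cont_fun; auto. apply continuous_Rinv; auto.
Qed.

Lemma Tk_cont : forall phi : R -> R, (forall x, continuous phi x) -> forall k c, continuous (Tk k phi) c.
Proof.
  intros phi Hc k. induction k; simpl; auto. apply T_cont. auto.
Qed.

Lemma iter_A : forall phi : R -> R, (forall x, continuous phi x) ->
  forall k c, iter_int k (fun xs => phi (c * prod_one_minus xs)) (Tk k phi c).
Proof.
  intros phi Hc k. induction k; intros c.
  - simpl. unfold prod_one_minus. simpl. rewrite Rmult_1_r. reflexivity.
  - simpl. exists (fun x => Tk k phi (c * (1 - x))). split.
    + intros x Hx.
      replace (fun xs : list R => phi (c * ((1 - x) * prod_one_minus xs))) with
        (fun xs => phi (c * (1 - x) * prod_one_minus xs)).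
      apply IHk.
      apply functional_extensionality. intros xs. unfold prod_one_minus. simpl.
      f_equal. ring.
    + assert (Hex : ex_RInt (fun x => Tk k phi (c * (1 - x))) 0 1).
      { apply cont_exRInt. intros x.
        apply (continuous_comp (fun x => c * (1 - x)) (Tk k phi)).
        apply exd_cont. auto_derive; auto. apply Tk_cont; auto. }
      exists (ex_RInt_Reals_0 _ _ _ Hex). rewrite <- RInt_Reals. reflexivity.
Qed.


Lemma dplus : forall (f g : R -> R) x df dg, is_derive f x df -> is_derive g x dg ->
  is_derive (fun y => f y + g y) x (df + dg).
Proof. intros. apply (@is_derive_plus R_AbsRing R_NormedModule); auto. Qed.

Lemma dmult : forall (f g : R -> R) x df dg, is_derive f x df -> is_derive g x dg ->
  is_derive (fun y => f y * g y) x (df * g x + f x * dg).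
Proof. intros. apply (@is_derive_mult R_AbsRing); auto. intros; apply Rmult_comm. Qed.

Lemma dconst : forall (a x : R), is_derive (fun _ : R => a) x 0.
Proof. intros. apply (@is_derive_const R_AbsRing R_NormedModule). Qed.

Lemma dext : forall (f g : R -> R) x l, (forall t, f t = g t) -> is_derive f x l -> is_derive g x l.
Proof. intros. apply (@is_derive_ext R_AbsRing R_NormedModule f g); auto. Qed.

Lemma dcomp : forall (f g : R -> R) x df dg, is_derive f (g x) df -> is_derive g x dg ->
  is_derive (fun y => f (g y)) x (dg * df).
Proof. intros. apply (@is_derive_comp R_AbsRing R_NormedModule); auto. Qed.

Lemma is_derive_sum : forall (F F' : nat -> R -> R) n x,
  (forall i, (i <= n)%nat -> is_derive (F i) x (F' i x)) ->
  is_derive (fun y => sum_f_R0 (fun i => F i y) n) x (sum_f_R0 (fun i => F' i x) n).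
Proof.
  intros F F' n x H. induction n.
  - simpl. apply H. lia.
  - simpl. apply dplus. apply IHn. intros; apply H; lia. apply H; lia.
Qed.

Definition pw (m : nat) (L : R) : R := L ^ m / INR (fact m).
Definition dpw (m : nat) (L : R) : R := match m with O => 0 | S m' => pw m' L end.

Lemma fact_pos_R : forall m, 0 < INR (fact m).
Proof. intros. apply lt_0_INR. apply lt_O_fact. Qed.

Lemma pw_deriv : forall m L, is_derive (pw m) L (dpw m L).
Proof.
  intros m L. unfold pw. destruct m.
  - simpl. apply (dext (fun _ => 1 / 1)). intros; simpl; field. apply dconst.
  - simpl dpw. auto_derive; auto. unfold pw.
    change (match m with 0%nat => 1 | S _ => INR m + 1 end) with (INR (S m)).
    rewrite plus_INR, mult_INR.
    pose proof (fact_pos_R m). pose proof (pos_INR m). rewrite S_INR. field. nra.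
Qed.

Definition cc (i : nat) : R := (-1) ^ i / INR (fact i).

Lemma binom_zero : forall k L, (1 <= k)%nat ->
  sum_f_R0 (fun i => pw (k - i) L * cc i * L ^ i) k = 0.
Proof.
  intros k L Hk.
  pose proof (binomial (- L) L k) as B.
  replace (- L + L) with 0 in B by ring.
  rewrite pow_i in B by lia.
  assert (E : sum_f_R0 (fun i => pw (k - i) L * cc i * L ^ i) k =
     sum_f_R0 (fun i => C k i * (- L) ^ i * L ^ (k - i)) k / INR (fact k)).
  { unfold Rdiv. rewrite Rmult_comm, scal_sum. apply sum_eq. intros i Hi.
    unfold pw, cc, C. replace (- L) with (-1 * L) by ring. rewrite Rpow_mult_distr.
    pose proof (fact_pos_R k). pose proof (fact_pos_R i). pose proof (fact_pos_R (k - i)).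
    field. lra. }
  rewrite E, <- B. unfold Rdiv. ring.
Qed.

Definition Af (d i : nat) (L : R) : R := Ileft (fj i (INR d)) L.
Definition Cf (d k : nat) (L : R) : R :=
  sum_f_R0 (fun i => pw (k - 1 - i) L * cc i * Af d i L) (k - 1).

Lemma INR_d_pos : forall d, (1 <= d)%nat -> 0 < INR d.
Proof. intros. apply lt_0_INR. lia. Qed.

Lemma Af_deriv : forall d i L, (1 <= d)%nat -> is_derive (Af d i) L (fj i (INR d) L).
Proof.
  intros d i L Hd.
  destruct (Dom_fj i (INR d) (INR_d_pos d Hd)) as [g [K1 [K2 HD]]].
  apply (dext (fun L => Af d i 0 + RInt (fj i (INR d)) 0 L)).
  { intros t. unfold Af. symmetry. eapply Ileft_split; eauto. }
  replace (fj i (INR d) L) with (0 + fj i (INR d) L) by ring.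
  apply dplus. apply dconst.
  apply (is_derive_RInt (fj i (INR d)) (fun b => RInt (fj i (INR d)) 0 b) 0 L).
  apply filter_forall. intros b. apply (@RInt_correct R_CompleteNormedModule).
  apply cont_exRInt. apply fj_cont.
  apply fj_cont.
Qed.

Lemma Cf1_deriv : forall d L, (1 <= d)%nat -> is_derive (Cf d 1) L (fj 0 (INR d) L).
Proof.
  intros d L Hd. apply (dext (Af d 0)).
  { intros t. unfold Cf, pw, cc. simpl. field. }
  apply Af_deriv; auto.
Qed.

Lemma Cf_deriv : forall d k L, (1 <= d)%nat -> (1 <= k)%nat ->
  is_derive (Cf d (S k)) L (Cf d k L).
Proof.
  intros d k L Hd Hk.
  apply (dext (fun L => sum_f_R0 (fun i => pw (k - i) L * cc i * Af d i L) k)).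
  { intros t. unfold Cf. replace (S k - 1)%nat with k by lia.
    apply sum_eq. intros i Hi. replace (S k - 1 - i)%nat with (k - i)%nat by lia. reflexivity. }
  set (w := exp (INR d * L - exp L)).
  eapply is_derive_ext_loc; [apply filter_forall; intros t; reflexivity|].
  assert (Hder := is_derive_sum (fun i y => pw (k - i) y * cc i * Af d i y)
     (fun i x => dpw (k - i) x * cc i * Af d i x + pw (k - i) x * cc i * fj i (INR d) x) k L).
  replace (Cf d k L) with
     (sum_f_R0 (fun i => dpw (k - i) L * cc i * Af d i L + pw (k - i) L * cc i * fj i (INR d) L) k).
  apply Hder.
  { intros i Hi.
    eapply is_derive_ext_loc; [apply filter_forall; intros t; reflexivity|].
    assert (H1 := dmult (fun y => pw (k - i) y * cc i) (Af d i) L (dpw (k - i) L * cc i)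
       (fj i (INR d) L)).
    replace (dpw (k - i) L * cc i * Af d i L + pw (k - i) L * cc i * fj i (INR d) L) with
      (dpw (k - i) L * cc i * Af d i L + pw (k - i) L * cc i * fj i (INR d) L) by ring.
    apply H1.
    - replace (dpw (k - i) L * cc i) with (dpw (k - i) L * cc i + pw (k - i) L * 0) by ring.
      apply dmult. apply pw_deriv. apply dconst.
    - apply Af_deriv; auto. }
  rewrite sum_plus.
  assert (E2 : sum_f_R0 (fun i => pw (k - i) L * cc i * fj i (INR d) L) k = 0).
  { rewrite <- (Rmult_0_l w). rewrite <- (binom_zero k L Hk).
    rewrite Rmult_comm, scal_sum. apply sum_eq. intros i Hi. unfold fj, w. ring. }
  rewrite E2, Rplus_0_r.
  destruct k as [|k0]. lia.
  rewrite tech5. replace (S k0 - S k0)%nat with 0%nat by lia. change (dpw 0 L) with 0.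
  rewrite !Rmult_0_l, Rplus_0_r.
  unfold Cf. replace (S k0 - 1)%nat with k0 by lia.
  apply sum_eq. intros i Hi. replace (S k0 - i)%nat with (S (k0 - i)) by lia.
  change (dpw (S (k0 - i)) L) with (pw (k0 - i) L). replace (S k0 - 1 - i)%nat with (k0 - i)%nat by lia. reflexivity.
Qed.


Definition Van (F : R -> R) := forall eps, 0 < eps -> exists M, forall L, L <= - M -> Rabs (F L) < eps.

Lemma Van_ext : forall F1 F2, (forall L, F1 L = F2 L) -> Van F1 -> Van F2.
Proof. intros F1 F2 E H eps He. destruct (H eps He) as [M HM]. exists M. intros L HL.
  rewrite <- E. auto. Qed.

Lemma Van_plus : forall F1 F2, Van F1 -> Van F2 -> Van (fun L => F1 L + F2 L).
Proof.
  intros F1 F2 H1 H2 eps He.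
  destruct (H1 (eps/2) ltac:(lra)) as [M1 HM1]. destruct (H2 (eps/2) ltac:(lra)) as [M2 HM2].
  exists (Rmax M1 M2). intros L HL. pose proof (Rmax_l M1 M2). pose proof (Rmax_r M1 M2).
  eapply Rle_lt_trans. apply Rabs_triang.
  specialize (HM1 L ltac:(lra)). specialize (HM2 L ltac:(lra)). lra.
Qed.

Lemma Van_scal : forall K F, Van F -> Van (fun L => K * F L).
Proof.
  intros K F H eps He.
  destruct (H (eps / (Rabs K + 1))) as [M HM].
  { apply Rdiv_lt_0_compat; auto. pose proof (Rabs_pos K); lra. }
  exists M. intros L HL. rewrite Rabs_mult. specialize (HM L HL).
  pose proof (Rabs_pos K). pose proof (Rabs_pos (F L)).
  apply (Rle_lt_trans _ ((Rabs K + 1) * Rabs (F L))). nra.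
  apply (Rmult_lt_compat_l (Rabs K + 1)) in HM; [|lra].
  replace ((Rabs K + 1) * (eps / (Rabs K + 1))) with eps in HM by (field; lra). lra.
Qed.

Lemma Van_sum : forall (F : nat -> R -> R) n, (forall i, (i <= n)%nat -> Van (F i)) ->
  Van (fun L => sum_f_R0 (fun i => F i L) n).
Proof.
  intros F n H. induction n.
  - simpl. apply H. lia.
  - simpl. apply Van_plus. apply IHn. intros; apply H; lia. apply H; lia.
Qed.

Lemma Van_term : forall d i m, (1 <= d)%nat -> Van (fun L => L ^ m * Af d i L).
Proof.
  intros d i m Hd eps He.
  destruct (Dom_fj i (INR d) (INR_d_pos d Hd)) as [g [K1 [K2 HD]]].
  assert (Hg : 0 < g) by apply HD.
  assert (HK1 : 0 <= K1) by (destruct HD as [_ [? _]]; lra).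
  set (K := (INR m / (g / 2)) ^ m * (K1 / g)).
  assert (HK : 0 <= K).
  { unfold K. apply Rmult_le_pos. apply pow_le. apply Rdiv_le_0_compat. apply pos_INR. lra.
    apply Rdiv_le_0_compat; lra. }
  destruct (exp_small (g / 2) K eps ltac:(lra) HK He) as [M0 [HM0 HM]].
  exists M0. intros L HL.
  assert (HL0 : L <= 0) by lra.
  rewrite Rabs_mult, <- RPow_abs, Rabs_left1 by auto.
  pose proof (Ileft_small _ _ _ _ L HD HL0) as Ha. fold (Af d i L) in Ha.
  pose proof (pow_exp_bound_a m (- L) (g / 2) ltac:(lra) ltac:(lra)) as Hp.
  specialize (HM (- L) ltac:(lra)).
  eapply Rle_lt_trans; [|exact HM].
  assert (0 <= (- L) ^ m) by (apply pow_le; lra).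
  eapply Rle_trans. apply Rmult_le_compat; try apply Rabs_pos; auto. exact Hp. exact Ha.
  unfold K.
  replace ((INR m / (g / 2)) ^ m * exp (g / 2 * - L) * (K1 / g * exp (g * L))) with
    ((INR m / (g / 2)) ^ m * (K1 / g) * (exp (g / 2 * - L) * exp (g * L))) by ring.
  rewrite <- exp_plus. replace (g / 2 * - L + g * L) with (- (g / 2 * - L)) by field. lra.
Qed.

Lemma Van_Cf : forall d k, (1 <= d)%nat -> Van (Cf d k).
Proof.
  intros d k Hd. unfold Cf.
  apply Van_sum. intros i Hi.
  apply (Van_ext (fun L => (cc i / INR (fact (k - 1 - i))) * (L ^ (k - 1 - i) * Af d i L))).
  { intros L. unfold pw. field. pose proof (fact_pos_R (k - 1 - i)). lra. }
  apply Van_scal. apply Van_term; auto.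
Qed.

Lemma FTC0 : forall (phi D : R -> R), (forall x, continuous phi x) ->
  (forall y, 0 < y -> is_derive D y (phi y)) ->
  (forall eps, 0 < eps -> exists del, 0 < del /\ forall y, 0 < y < del -> Rabs (D y) < eps) ->
  forall c, 0 < c -> RInt phi 0 c = D c.
Proof.
  intros phi D Hc Hd Hv c Hc0.
  cut (Rabs (RInt phi 0 c - D c) <= 0).
  { intros H. pose proof (Rabs_pos (RInt phi 0 c - D c)).
    assert (Rabs (RInt phi 0 c - D c) = 0) by lra. apply Rabs_eq_0 in H1. lra. }
  apply le_eps. intros e He. rewrite Rplus_0_l.
  destruct (Hv (e / 2) ltac:(lra)) as [del1 [Hdel1 Hv1]].
  pose proof (proj1 (filterlim_locally (F := locally 0) (fun y => RInt phi 0 y) (RInt phi 0 0))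
     (RInt_cont_fun phi Hc 0)) as Hcont.
  destruct (Hcont (mkposreal (e / 2) ltac:(lra))) as [del2 Hdel2].
  set (y := Rmin c (Rmin del1 del2) / 2).
  assert (Hy0 : 0 < y).
  { unfold y. apply Rdiv_lt_0_compat; [|lra]. apply Rmin_pos; auto. apply Rmin_pos; auto.
    apply cond_pos. }
  assert (Hy1 : y < c /\ y < del1 /\ y < del2).
  { unfold y. pose proof (Rmin_l c (Rmin del1 del2)). pose proof (Rmin_r c (Rmin del1 del2)).
    pose proof (Rmin_l del1 del2). pose proof (Rmin_r del1 del2). pose proof (cond_pos del2). lra. }
  assert (E1 : RInt phi y c = D c - D y).
  { apply is_RInt_unique.
    apply (@is_RInt_derive R_CompleteNormedModule D phi y c).
    - intros x Hx. rewrite Rmin_left in Hx by lra. apply Hd. lra.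
    - intros x _. auto. }
  rewrite (Chasles3 phi 0 y c Hc), E1.
  specialize (Hv1 y ltac:(lra)).
  assert (B : ball 0 del2 y).
  { apply ballR. rewrite Rminus_0_r, Rabs_right by lra. lra. }
  specialize (Hdel2 y B). change (Rabs (RInt phi 0 y - RInt phi 0 0) < e / 2) in Hdel2.
  rewrite RInt_pt, Rminus_0_r in Hdel2.
  replace (RInt phi 0 y + (D c - D y) - D c) with (RInt phi 0 y - D y) by ring.
  eapply Rle_trans. apply Rabs_triang. rewrite Rabs_Ropp. lra.
Qed.


Lemma Dlog : forall (F F' : R -> R) nn, 0 < nn -> (forall L, is_derive F L (F' L)) -> Van F ->
  (forall y, 0 < y -> is_derive (fun y => F (ln nn + ln y)) y (F' (ln nn + ln y) / y)) /\
  (forall eps, 0 < eps -> exists del, 0 < del /\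
      forall y, 0 < y < del -> Rabs (F (ln nn + ln y)) < eps).
Proof.
  intros F F' nn Hnn Hd Hv. split.
  - intros y Hy.
    replace (F' (ln nn + ln y) / y) with ((0 + / y) * F' (ln nn + ln y)) by (field; lra).
    apply (dcomp F (fun y => ln nn + ln y)). apply Hd.
    apply dplus. apply dconst. apply is_derive_ln; auto.
  - intros eps He. destruct (Hv eps He) as [M HM].
    exists (exp (- M - ln nn)). split. apply exp_pos.
    intros y [Hy1 Hy2]. apply HM.
    assert (ln y < - M - ln nn).
    { rewrite <- (ln_exp (- M - ln nn)). apply ln_increasing; auto. }
    lra.
Qed.

Definition psi (d n : nat) (p : R) : R := INR n ^ d * p ^ (d - 1) * exp (- INR n * p).

Lemma psi_cont : forall d n x, continuous (psi d n) x.
Proof. intros. apply exd_cont. unfold psi. auto_derive; auto. Qed.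

Lemma psi_eq : forall d n y, (1 <= d)%nat -> (1 <= n)%nat -> 0 < y ->
  fj 0 (INR d) (ln (INR n) + ln y) / y = psi d n y.
Proof.
  intros d n y Hd Hn Hy.
  assert (Hnn : 0 < INR n) by (apply lt_0_INR; lia).
  unfold fj, psi. simpl pow. rewrite Rmult_1_l.
  rewrite <- ln_mult by auto.
  rewrite exp_ln by nra.
  unfold Rminus. rewrite exp_plus.
  replace (exp (INR d * ln (INR n * y))) with (Rpower (INR n * y) (INR d)) by reflexivity.
  rewrite Rpower_pow by nra.
  rewrite Rpow_mult_distr.
  replace (y ^ d) with (y ^ (d - 1) * y).
  2:{ replace d with (S (d - 1)) at 2 by lia. simpl. ring. }
  replace (- INR n * y) with (- (INR n * y)) by ring.
  field. lra.
Qed.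

Lemma mul_div_c : forall c A : R, c <> 0 -> c * (A / c) = A.
Proof. intros. field. auto. Qed.

Lemma Qk : forall d n k, (1 <= d)%nat -> (1 <= n)%nat -> forall c, 0 < c ->
  c * Tk (S k) (psi d n) c = Cf d (S k) (ln (INR n) + ln c).
Proof.
  intros d n k Hd Hn.
  assert (Hnn : 0 < INR n) by (apply lt_0_INR; lia).
  induction k; intros c Hc.
  - simpl Tk. rewrite T_subst; [| apply psi_cont | lra].
    rewrite mul_div_c by lra.
    destruct (Dlog (Cf d 1) (fj 0 (INR d)) (INR n) Hnn) as [D1 D2].
    { intros L. apply Cf1_deriv; auto. }
    { apply Van_Cf; auto. }
    apply (FTC0 (psi d n) (fun y => Cf d 1 (ln (INR n) + ln y))); auto.
    + apply psi_cont.
    + intros y Hy. rewrite <- psi_eq by auto. apply D1; auto.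
  - change (Tk (S (S k)) (psi d n)) with (T (Tk (S k) (psi d n))).
    rewrite T_subst; [| apply Tk_cont, psi_cont | lra].
    rewrite mul_div_c by lra.
    destruct (Dlog (Cf d (S (S k))) (Cf d (S k)) (INR n) Hnn) as [D1 D2].
    { intros L. apply Cf_deriv; auto. lia. }
    { apply Van_Cf; auto. }
    apply (FTC0 (Tk (S k) (psi d n)) (fun y => Cf d (S (S k)) (ln (INR n) + ln y))); auto.
    + apply Tk_cont, psi_cont.
    + intros y Hy.
      replace (Tk (S k) (psi d n) y) with (Cf d (S k) (ln (INR n) + ln y) / y).
      apply D1; auto.
      rewrite <- IHk by auto. field. lra.
Qed.


Definition Eh (d : nat) (x : R) : R := exp (INR (d - 1) * x - exp x).
Definition Hh (d i : nat) (x : R) : R := - 2 * (x ^ i * Eh d x).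
Definition Hd (d i : nat) (x : R) : R :=
  - 2 * (INR i * x ^ (i - 1) * Eh d x + x ^ i * (Eh d x * (INR (d - 1) - exp x))).

Lemma Hh_deriv : forall d i x, is_derive (Hh d i) x (Hd d i x).
Proof.
  intros. unfold Hh, Hd, Eh. auto_derive; auto. replace (i - 1)%nat with (Nat.pred i) by lia. unfold Rminus. ring.
Qed.

Lemma Hd_cont : forall d i x, continuous (Hd d i) x.
Proof. intros. apply exd_cont. unfold Hd, Eh. auto_derive; auto. Qed.

Lemma fj_le_Hd : forall d i L x, (1 <= d)%nat -> (i <= d - 1)%nat -> 1 <= L ->
  4 * INR d <= exp L -> L <= x -> fj i (INR d) x <= Hd d i x.
Proof.
  intros d i L x Hd1 Hi HL HeL Hx.
  assert (HE : 0 < Eh d x) by apply exp_pos.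
  assert (Hex : exp L <= exp x) by (apply exp_mono; lra).
  assert (Hfj : fj i (INR d) x = x ^ i * exp x * Eh d x).
  { unfold fj, Eh. rewrite Rmult_assoc, <- exp_plus. f_equal. f_equal.
    replace (INR d) with (INR (d - 1) + 1).
    ring. rewrite <- S_INR. f_equal. lia. }
  rewrite Hfj. unfold Hd.
  assert (Hxi : 0 <= x ^ i) by (apply pow_le; lra).
  assert (Hii : INR i * x ^ (i - 1) <= INR (d - 1) * x ^ i).
  { destruct i. simpl. rewrite Rmult_0_l. apply Rmult_le_pos. apply pos_INR. lra.
    replace (S i - 1)%nat with i by lia.
    assert (INR (S i) <= INR (d - 1)) by (apply le_INR; auto).
    assert (0 <= x ^ i) by (apply pow_le; lra).
    replace (x ^ S i) with (x * x ^ i) by (simpl; ring). assert (x ^ i <= x * x ^ i) by nra.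
    apply (Rle_trans _ (INR (d - 1) * x ^ i)). apply Rmult_le_compat_r; lra.
    apply Rmult_le_compat_l. apply pos_INR. lra. }
  assert (Hd' : INR (d - 1) <= INR d) by (apply le_INR; lia).
  assert (0 <= INR (d - 1)) by apply pos_INR.
  assert (4 * INR (d - 1) * x ^ i <= exp x * x ^ i) by nra.
  nra.
Qed.

Lemma tail_bound : forall d i L b, (1 <= d)%nat -> (i <= d - 1)%nat -> 1 <= L ->
  4 * INR d <= exp L -> L <= b ->
  0 <= RInt (fj i (INR d)) L b <= 2 * (L ^ i * Eh d L).
Proof.
  intros d i L b Hd1 Hi HL HeL Hb. split.
  - apply RInt_ge_0; auto. apply cont_exRInt, fj_cont.
    intros x Hx. unfold fj. apply Rmult_le_pos. apply pow_le; lra. left; apply exp_pos.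
  - apply (Rle_trans _ (RInt (Hd d i) L b)).
    + apply RInt_le; auto. apply cont_exRInt, fj_cont. apply cont_exRInt, Hd_cont.
      intros x Hx. apply (fj_le_Hd d i L x); auto; lra.
    + assert (E : RInt (Hd d i) L b = Hh d i b - Hh d i L).
      { apply is_RInt_unique.
        apply (@is_RInt_derive R_CompleteNormedModule (Hh d i) (Hd d i)).
        intros; apply Hh_deriv. intros; apply Hd_cont. }
      rewrite E. unfold Hh.
      assert (0 <= b ^ i * Eh d b).
      { apply Rmult_le_pos. apply pow_le; lra. left; apply exp_pos. }
      lra.
Qed.

Lemma gap_bound : forall d i L, (1 <= d)%nat -> (i <= d - 1)%nat -> 1 <= L ->
  4 * INR d <= exp L ->
  Rabs (Af d i L - G i (INR d)) <= 2 * (L ^ i * Eh d L).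
Proof.
  intros d i L Hd1 Hi HL HeL.
  destruct (Dom_fj i (INR d) (INR_d_pos d Hd1)) as [g [K1 [K2 HD]]].
  pose proof (right_gap (fj i (INR d)) g K1 K2 L 0 (2 * (L ^ i * Eh d L)) HD) as R.
  assert (P : 0 <= Iinf (fj i (INR d)) - Ileft (fj i (INR d)) L <= 2 * (L ^ i * Eh d L)).
  { apply R. intros b Hb. apply tail_bound; auto.
    pose proof (Rmax_r 0 L). lra. }
  unfold Af, G. rewrite Rabs_minus_sym. rewrite Rabs_right by lra. lra.
Qed.


Theorem lemmaL (d : nat) (hd : (1 <= d)%nat) :
  exists G : nat -> R -> R, (forall j, GammaDer j (G j)) /\
  exists C : R, exists N : nat, forall n : nat, (N <= n)%nat ->
    exists v, iter_int d (Ihat_integrand d n) v /\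
      Rabs (v - (ln (INR n)) ^ (d - 1) *
              sum_f_R0 (fun j => (-1) ^ j * G j (INR d)
                                 / (INR (fact j) * INR (fact (d - 1 - j)))
                                 / (ln (INR n)) ^ j) (d - 1))
      <= C * (INR n * ln (INR n)) ^ (d - 1) * exp (- INR n).
Proof.
  exists G. split. apply GammaDer_G.
  exists (2 * INR d), (4 * d + 3)%nat. intros n Hn.
  assert (Hn1 : (1 <= n)%nat) by lia.
  assert (HnR : 4 * INR d + 3 <= INR n).
  { replace (4 * INR d + 3) with (INR (4 * d + 3)). apply le_INR; auto.
    rewrite plus_INR, mult_INR. simpl. ring. }
  assert (Hdpos : 0 < INR d) by (apply INR_d_pos; auto).
  assert (Hnn : 0 < INR n) by lra.
  exists (Tk d (psi d n) 1). split.
  { replace (Ihat_integrand d n) with (fun xs => psi d n (1 * prod_one_minus xs)).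
    apply iter_A. apply psi_cont.
    apply functional_extensionality. intros xs. unfold Ihat_integrand, psi.
    rewrite Rmult_1_l. reflexivity. }
  set (L := ln (INR n)).
  assert (HL1 : 1 <= L).
  { unfold L. rewrite <- (ln_exp 1). destruct (Req_dec (exp 1) (INR n)) as [E|E].
    rewrite E. lra. left. apply ln_increasing. apply exp_pos. pose proof exp_le_3. lra. }
  assert (HeL : 4 * INR d <= exp L) by (unfold L; rewrite exp_ln; lra).
  assert (HLne : L <> 0) by lra.
  assert (Hv : Tk d (psi d n) 1 = Cf d d L).
  { pose proof (Qk d n (d - 1) hd Hn1 1 Rlt_0_1) as Q.
    replace (S (d - 1)) with d in Q by lia.
    rewrite ln_1, Rplus_0_r, Rmult_1_l in Q. exact Q. }
  rewrite Hv.
  assert (HS : ln (INR n) ^ (d - 1) *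
    sum_f_R0 (fun j => (-1) ^ j * G j (INR d) / (INR (fact j) * INR (fact (d - 1 - j)))
                       / ln (INR n) ^ j) (d - 1) =
    sum_f_R0 (fun j => pw (d - 1 - j) L * cc j * G j (INR d)) (d - 1)).
  { fold L. rewrite scal_sum. apply sum_eq. intros j Hj.
    unfold pw, cc.
    replace (L ^ (d - 1)) with (L ^ (d - 1 - j) * L ^ j).
    2:{ rewrite <- pow_add. f_equal. lia. }
    pose proof (fact_pos_R j). pose proof (fact_pos_R (d - 1 - j)).
    assert (L ^ j <> 0) by (apply pow_nonzero; auto).
    field. repeat split; lra. }
  fold L in HS. rewrite HS. unfold Cf. rewrite <- minus_sum.
  eapply Rle_trans. apply sum_f_R0_triangle.
  set (B := 2 * (L ^ (d - 1) * (INR n ^ (d - 1) * exp (- INR n)))).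
  apply (Rle_trans _ (sum_f_R0 (fun _ => B) (d - 1))).
  { apply sum_Rle. intros j Hj.
    replace (pw (d - 1 - j) L * cc j * Af d j L - pw (d - 1 - j) L * cc j * G j (INR d))
      with (pw (d - 1 - j) L * cc j * (Af d j L - G j (INR d))) by ring.
    rewrite !Rabs_mult.
    pose proof (gap_bound d j L hd Hj HL1 HeL) as Hg.
    assert (HE : Eh d L = INR n ^ (d - 1) * exp (- INR n)).
    { unfold Eh, L. unfold Rminus. rewrite exp_plus, exp_ln by auto.
      replace (exp (INR (d - 1) * ln (INR n))) with (Rpower (INR n) (INR (d - 1))) by reflexivity.
      rewrite Rpower_pow by auto. reflexivity. }
    rewrite HE in Hg.
    assert (Hpw : Rabs (pw (d - 1 - j) L) <= L ^ (d - 1 - j)).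
    { unfold pw. rewrite Rabs_right.
      2:{ apply Rle_ge, Rdiv_le_0_compat. apply pow_le; lra. apply fact_pos_R. }
      pose proof (fact_pos_R (d - 1 - j)).
      assert (1 <= INR (fact (d - 1 - j))).
      { replace 1 with (INR 1) by reflexivity. apply le_INR. pose proof (lt_O_fact (d - 1 - j)). lia. }
      assert (0 <= L ^ (d - 1 - j)) by (apply pow_le; lra).
      unfold Rdiv. apply (Rmult_le_reg_r (INR (fact (d - 1 - j)))). lra.
      rewrite Rmult_assoc, Rinv_l by lra. nra. }
    assert (Hcc : Rabs (cc j) <= 1).
    { unfold cc. rewrite Rabs_div by (apply Rgt_not_eq, fact_pos_R).
      rewrite <- RPow_abs. replace (Rabs (-1)) with 1 by (unfold Rabs; destruct Rcase_abs; lra).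
      rewrite pow1. rewrite Rabs_right by (apply Rle_ge; left; apply fact_pos_R).
      assert (1 <= INR (fact j)).
      { replace 1 with (INR 1) by reflexivity. apply le_INR. pose proof (lt_O_fact j). lia. }
      apply (Rmult_le_reg_r (INR (fact j))). lra. field_simplify; lra. }
    assert (HB : L ^ (d - 1 - j) * (2 * (L ^ j * (INR n ^ (d - 1) * exp (- INR n)))) = B).
    { unfold B. replace (L ^ (d - 1)) with (L ^ (d - 1 - j) * L ^ j).
      ring. rewrite <- pow_add. f_equal. lia. }
    rewrite <- HB.
    assert (0 <= L ^ (d - 1 - j)) by (apply pow_le; lra).
    pose proof (Rabs_pos (cc j)). pose proof (Rabs_pos (pw (d - 1 - j) L)).
    pose proof (Rabs_pos (Af d j L - G j (INR d))).
    apply (Rle_trans _ (L ^ (d - 1 - j) * 1 * Rabs (Af d j L - G j (INR d)))).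
    apply Rmult_le_compat_r; auto. apply Rmult_le_compat; auto.
    rewrite Rmult_1_r. apply Rmult_le_compat_l; auto. }
  rewrite sum_cte. replace (S (d - 1)) with d by lia.
  unfold B. rewrite Rpow_mult_distr. fold L. right. ring.
Qed.
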